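(* Let $n \geq 2$ and let $P_n=u_0u_1\dots u_n$ be the path with $n$ edges. For every walk $W$ of $P_n$, there exists a walk of $P_n$ equivalent to $W$ which follows a walk $S$ of the form $S=u_iu_{i-1}\dots u_mu_{m+1}\dots u_Mu_{M-1}\dots u_{j}$ for some indices $m \leq i\le j \leq M$.
   Context: A walk of a graph $G$ is a sequence of vertices $v_0\dots v_l$ with $v_tv_{t+1}\in E(G)$ for all $t$ (vertices and edges may repeat). A walk $W'$ follows the walk $W=v_0\dots v_l$ if there are non-negative integers $i_0,\dots,i_{l-1}$ such that $W'=v_0(v_1v_0)^{i_0}v_1\dots v_{l-1}(v_lv_{l-1})^{i_{l-1}}v_l$, i.e. $W'$ is obtained by traversing $W$ from start to end and inserting, along each edge $v_tv_{t+1}$, some number $i_t$ of half-turns $v_{t+1}v_tv_{t+1}$. Two walks are equivalent if their multisets of traversed edges are equal. *)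

(* Defs.v *)
(* The path P_n = u_0 u_1 ... u_n has vertex u_t encoded as
   the natural number t (0 <= t <= n); u_t u_s is an edge iff |t - s| = 1. *)
From mathcomp Require Import all_boot.
Set Implicit Arguments. Unset Strict Implicit. Unset Printing Implicit Defensive.

Definition path_adj (x y : nat) : bool := (y == x.+1) || (x == y.+1).

Definition is_walk (n : nat) (W : seq nat) : Prop :=
  match W with
  | [::] => False
  | x :: s => path path_adj x s /\ all (fun v => v <= n) W
  end.

Definition uedge (x y : nat) : nat * nat := (minn x y, maxn x y).

Definition walk_edges (W : seq nat) : seq (nat * nat) :=
  match W with
  | [::] => [::]
  | x :: s => pairmap uedge x s
  end.

Definition walk_equiv (W1 W2 : seq nat) : Prop :=
  perm_eq (walk_edges W1) (walk_edges W2).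

(* exp_tail x s k: starting at x, traverse s, inserting k_t half-turns
   (y x y repeated) along the t-th edge x y *)
Fixpoint exp_tail (x : nat) (s : seq nat) (k : seq nat) : seq nat :=
  match s, k with
  | y :: s', i :: k' => y :: flatten (nseq i [:: x; y]) ++ exp_tail y s' k'
  | _, _ => [::]
  end.

(* W' follows W = v_0 ... v_l :  W' = v_0 (v_1 v_0)^{i_0} v_1 ... v_{l-1} (v_l v_{l-1})^{i_{l-1}} v_l
   (note v_0 (v_1 v_0)^i v_1 = v_0 v_1 (v_0 v_1)^i) *)
Definition follows (W' W : seq nat) : Prop :=
  match W with
  | [::] => False
  | x :: s => exists k : seq nat, size k = size s /\ W' = x :: exp_tail x s k
  end.

(* S = u_i u_{i-1} ... u_m u_{m+1} ... u_M u_{M-1} ... u_j *)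
Definition zigzag (m i j M : nat) : seq nat :=
  rev (iota m (i - m).+1) ++ iota m.+1 (M - m) ++ rev (iota j (M - j)).

Example zigzag_test : zigzag 1 3 2 5 = [:: 3; 2; 1; 2; 3; 4; 5; 4; 3; 2].
Proof. by []. Qed.
Example follows_test : follows [:: 1; 2; 1; 2; 3] [:: 1; 2; 3].
Proof. by exists [:: 1; 0]. Qed.

(* Main.v *)
Require Import Defs.
From mathcomp Require Import all_boot.
From mathcomp Require Import zify.
Set Implicit Arguments. Unset Strict Implicit. Unset Printing Implicit Defensive.

Lemma walk_edges_cons x y s : walk_edges (x :: y :: s) = uedge x y :: walk_edges (y :: s).
Proof. by []. Qed.

Lemma walk_edges_cat x A B :
  walk_edges (x :: A ++ B) = walk_edges (x :: A) ++ walk_edges (last x A :: B).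
Proof. by rewrite /walk_edges pairmap_cat. Qed.

Lemma uedgeC x y : uedge x y = uedge y x.
Proof. by rewrite /uedge minnC maxnC. Qed.

Lemma half_turns_edges (x y i : nat) (T : seq nat) :
  pairmap uedge y (flatten (nseq i [:: x; y]) ++ T) = nseq (i.*2) (uedge x y) ++ pairmap uedge y T.
Proof.
elim: i => [//|i IH] /=. rewrite IH uedgeC. by [].
Qed.

Lemma exp_tail_edges (x y : nat) (s : seq nat) (i : nat) (k : seq nat) :
  walk_edges (x :: exp_tail x (y :: s) (i :: k)) =
  nseq (i.*2).+1 (uedge x y) ++ walk_edges (y :: exp_tail y s k).
Proof. by rewrite /= half_turns_edges. Qed.

Lemma half_turns_last (x y i : nat) (T : seq nat) : last y (flatten (nseq i [:: x; y]) ++ T) = last y T.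
Proof. by elim: i => [//|i IH] /=. Qed.

Lemma last_exp_tail x s k : size k = size s -> last x (exp_tail x s k) = last x s.
Proof.
elim: s x k => [|y s IH] x [|i k] //= [Hk].
by rewrite half_turns_last IH.
Qed.

Lemma exp_tail_cat x s1 s2 k1 k2 : size k1 = size s1 ->
  exp_tail x (s1 ++ s2) (k1 ++ k2) = exp_tail x s1 k1 ++ exp_tail (last x s1) s2 k2.
Proof.
elim: s1 x k1 => [|y s IH] x [|i k] //= [Hk].
by rewrite IH // catA.
Qed.

Lemma exp_tail0 x s : exp_tail x s (nseq (size s) 0) = s.
Proof. elim: s x => [//|y s IH] x /=. by rewrite IH. Qed.

Lemma adj_sym x y : path_adj x y = path_adj y x.
Proof. by rewrite /path_adj orbC. Qed.

Lemma half_turns_path (x y i : nat) (T : seq nat) : path_adj x y ->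
  path path_adj y (flatten (nseq i [:: x; y]) ++ T) = path path_adj y T.
Proof.
move=> H; elim: i => [//|i IH] /=. by rewrite IH adj_sym H.
Qed.

Lemma path_exp_tail x s k : path path_adj x s -> path path_adj x (exp_tail x s k).
Proof.
elim: s x k => [|y s IH] x [|i k] //= /andP[H1 H2].
by rewrite H1 half_turns_path // IH.
Qed.

Lemma all_exp_tail (P : pred nat) x s k : all P (x :: s) -> all P (exp_tail x s k).
Proof.
elim: s x k => [|y s IH] x [|i k] //= /and3P[H1 H2 H3].
rewrite H2 /= all_cat IH /=; last by rewrite H2 H3. rewrite andbT.
by elim: i => [//|i IHi] /=; rewrite H1 H2.
Qed.

Lemma edges_form x s : path path_adj x s ->
  all (fun e : nat * nat => e.2 == e.1.+1) (walk_edges (x :: s)).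
Proof.
elim: s x => [//|y s IH] x /= /andP[H1 H2].
have := IH _ H2; rewrite /walk_edges => ->; rewrite andbT /uedge /=.
move: H1; rewrite /path_adj; lia.
Qed.

Definition C (W : seq nat) t := count_mem (t, t.+1) (walk_edges W).

Lemma invariant x s : path path_adj x s ->
  exists m M, [/\ m <= minn x (last x s), maxn x (last x s) <= M,
    (forall t, (0 < C (x :: s) t) = (m <= t < M)),
    (forall t, odd (C (x :: s) t) = (minn x (last x s) <= t < maxn x (last x s)))
    & M \in x :: s].
Proof.
elim: s x => [|y s IH] x /=.
  move=> _; exists x, x; split; rewrite ?minnn ?maxnn ?inE //.
    by move=> t; rewrite /C /=; lia.
  by move=> t; rewrite /C /=; lia.
move=> /andP[Hxy Hp].
have [m [M [H1 H2 H3 H4 H5]]] := IH y Hp.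
set b := last y s in H1 H2 H4 *.
exists (minn m x), (maxn M x).
have HC : forall t, C [:: x, y & s] t = ((uedge x y == (t, t.+1)) + C (y :: s) t).
  by move=> t; rewrite /C walk_edges_cons /=.
move: Hxy; rewrite /path_adj => /orP[/eqP Ey | /eqP Ex].
-
  have HU : forall t, (uedge x y == (t, t.+1)) = (t == x).
    move=> t; rewrite /uedge Ey /= xpair_eqE.
    rewrite (_ : minn x x.+1 = x); last by lia.
    rewrite (_ : maxn x x.+1 = x.+1); last by lia.
    by rewrite eqSS andbb eq_sym.
  split.
  + lia.
  + lia.
  + move=> t; rewrite HC HU.
    have := H3 t. subst y. case: (t =P x) => [->|Ht] /=; lia.
  + move=> t; rewrite HC HU oddD oddb H4. subst y. lia.
  + case: (leqP M x) => h; first by rewrite mem_head.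
    by rewrite in_cons H5 orbT.
-
  have HU : forall t, (uedge x y == (t, t.+1)) = (t == y).
    move=> t; rewrite /uedge Ex /= xpair_eqE.
    rewrite (_ : minn y.+1 y = y); last by lia.
    rewrite (_ : maxn y.+1 y = y.+1); last by lia.
    by rewrite eqSS andbb eq_sym.
  split.
  + lia.
  + lia.
  + move=> t; rewrite HC HU.
    have := H3 t. subst x. case: (t =P y) => [->|Ht] /=; lia.
  + move=> t; rewrite HC HU oddD oddb H4. subst x. lia.
  + case: (leqP M x) => h; first by rewrite mem_head.
    by rewrite in_cons H5 orbT.
Qed.

Lemma C_cons x y s t : C (x :: y :: s) t = (uedge x y == (t, t.+1)) + C (y :: s) t.
Proof. by rewrite /C walk_edges_cons /=. Qed.

Lemma rev_iota_cons m d : rev (iota m d.+1) = (m + d) :: rev (iota m d).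
Proof. by rewrite -addn1 iotaD rev_cat /=. Qed.

Lemma uedge_S x : uedge x x.+1 = (x, x.+1).
Proof. rewrite /uedge; f_equal; lia. Qed.

Lemma C_desc m d t : C (rev (iota m d.+1)) t = (m <= t < m + d).
Proof.
elim: d => [|d IH]; first by rewrite /C /=; lia.
rewrite rev_iota_cons rev_iota_cons C_cons -rev_iota_cons IH /uedge xpair_eqE.
lia.
Qed.

Lemma C_asc m d (f : nat -> nat) t :
  C (m :: exp_tail m (iota m.+1 d) (map f (iota m d))) t =
  if m <= t < m + d then (f t).*2.+1 else 0.
Proof.
elim: d m => [|d IH] m; first by rewrite /C /= addn0; case: ifP => //; lia.
rewrite /C [iota m.+1 _]/= [iota m _]/= [map _ _]/= exp_tail_edges count_cat.
rewrite -/(C _ t) IH count_nseq /= uedge_S xpair_eqE eqSS andbb.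
case: (t =P m) => [->|ne] /=.
  rewrite eqxx ltnn /= leqnn /= (_ : m < m + d.+1); last by lia.
  by rewrite mul1n addn0.
have -> : (m == t) = false by apply/eqP => h; apply: ne.
rewrite mul0n add0n.
have -> : (m < t < m.+1 + d) = (m <= t < m + d.+1) by lia.
by [].
Qed.

Lemma path_desc m d : path path_adj (m + d) (rev (iota m d)).
Proof.
elim: d => [//|d IH]. rewrite rev_iota_cons addnS /= IH andbT /path_adj. lia.
Qed.

Lemma last_desc m d : last (m + d) (rev (iota m d)) = m.
Proof.
elim: d => [|d IH]; first by rewrite addn0.
by rewrite rev_iota_cons /= IH.
Qed.

Lemma path_asc m d : path path_adj m (iota m.+1 d).
Proof.
elim: d m => [//|d IH] m /=. rewrite IH andbT /path_adj. lia.
Qed.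

Lemma last_asc m d : last m (iota m.+1 d) = m + d.
Proof. elim: d m => [|d IH] m /=; first by rewrite addn0. by rewrite IH addSnnS. Qed.

Lemma halfK2 c b : odd c = odd b -> b <= c -> (c - b)./2.*2 + b = c.
Proof.
move=> Ho Hb. have := odd_double_half (c - b). rewrite oddB // Ho addbb /=. lia.
Qed.

Lemma arith_final (m i j M c t : nat) : m <= i -> i <= j -> j <= M ->
  (0 < c) = (m <= t < M) -> odd c = (i <= t < j) ->
  (m <= t < m + (i - m)) +
  (if m <= t < m + (M - m) then ((c - (1 + (t < i) + (j <= t)))./2).*2.+1 else 0) +
  (j <= t < j + (M - j)) = c.
Proof.
move=> hmi hij hjM.
rewrite (subnKC hmi) (subnKC hjM) (subnKC (leq_trans hmi (leq_trans hij hjM))).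
case: (leqP m t) => hm /=; last first.
  move=> Hp _; move: Hp; rewrite /= (_ : (j <= t) = false); last by apply/negbTE; rewrite -ltnNge; apply: (leq_trans hm); apply: (leq_trans hmi hij).
  by case: c => [|c] //= _.
case: (ltnP t M) => hM /=; last first.
  move=> Hp _; rewrite (_ : (t < i) = false); last by apply/negbTE; rewrite -leqNgt; apply: leq_trans hM; apply: leq_trans hij hjM.
  by rewrite andbF; case: c Hp.
move=> Hp Ho.
have hc : 0 < c by rewrite Hp.
have key := odd_double_half c.
case: (ltnP t i) => hi /=.
  have hj : (t < j) by apply: leq_trans hi hij.
  have Ho' : odd c = false by rewrite Ho leqNgt hi.
  have hj2 : (j <= t) = false by rewrite leqNgt hj.
  rewrite hj2 /=.
  have Hb : odd c = odd (1 + 1 + 0) by rewrite Ho'.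
  have Hc : 1 + 1 + 0 <= c by move: key; rewrite Ho'; lia.
  have := halfK2 Hb Hc. lia.
case: (leqP j t) => hj /=.
  have Ho' : odd c = false by rewrite Ho ltnNge hj andbF.
  rewrite ?andbT.
  have Hb : odd c = odd (1 + 0 + 1) by rewrite Ho'.
  have Hc : 1 + 0 + 1 <= c by move: key; rewrite Ho'; lia.
  have := halfK2 Hb Hc. lia.
have Ho' : odd c = true by rewrite Ho hi hj.
rewrite ?andbF.
have Hb : odd c = odd (1 + 0 + 0) by rewrite Ho'.
have Hc : 1 + 0 + 0 <= c by [].
have := halfK2 Hb Hc. lia.
Qed.

Lemma zz_bound m i j M n v : m <= i -> i <= j -> j <= M -> M <= n ->
  v \in zigzag m i j M -> v <= n.
Proof.
move=> h1 h2 h3 h4; rewrite /zigzag !mem_cat !mem_rev !mem_iota.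
case/or3P => /andP[_ h]; lia.
Qed.

Lemma construct n m i j M (C0 : nat -> nat) :
  m <= i -> i <= j -> j <= M -> M <= n ->
  (forall t, (0 < C0 t) = (m <= t < M)) ->
  (forall t, odd (C0 t) = (i <= t < j)) ->
  exists W', [/\ is_walk n W', (forall t, C W' t = C0 t),
     is_walk n (zigzag m i j M) & follows W' (zigzag m i j M)].
Proof.
move=> hmi hij hjM hMn Hpos Hodd.
set A := rev (iota m (i - m)).
set B := iota m.+1 (M - m).
set Cc := rev (iota j (M - j)).
have ZZ : zigzag m i j M = i :: (A ++ B ++ Cc).
  by rewrite /zigzag rev_iota_cons subnKC.
have P1 : path path_adj i A by have := path_desc m (i - m); rewrite subnKC.
have L1 : last i A = m by have := last_desc m (i - m); rewrite subnKC.
have P2 : path path_adj m B by apply: path_asc.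
have L2 : last m B = M.
  rewrite /B last_asc; lia.
have P3 : path path_adj M Cc by have := path_desc j (M - j); rewrite subnKC.
have Pz : path path_adj i (A ++ B ++ Cc) by rewrite !cat_path P1 L1 P2 L2 P3.
have Az : all (fun v => v <= n) (i :: (A ++ B ++ Cc)).
  rewrite -ZZ; apply/allP => v; exact: zz_bound.
have Wz : is_walk n (zigzag m i j M) by rewrite ZZ; split.
set f := fun t => (C0 t - (1 + (t < i) + (j <= t)))./2.
set k := nseq (i - m) 0 ++ map f (iota m (M - m)) ++ nseq (M - j) 0.
have Sk : size k = size (A ++ B ++ Cc).
  by rewrite !size_cat !size_nseq size_map !size_rev !size_iota.
exists (i :: exp_tail i (A ++ B ++ Cc) k); split => //.
- split; first exact: path_exp_tail.
  by rewrite /= (allP Az i (mem_head _ _)) /=; apply: all_exp_tail.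
- move=> t.
  have EA : nseq (i - m) 0 = nseq (size A) 0 by rewrite size_rev size_iota.
  have EC : nseq (M - j) 0 = nseq (size Cc) 0 by rewrite size_rev size_iota.
  have SA : size (nseq (i - m) 0) = size A by rewrite EA size_nseq.
  have SB : size (map f (iota m (M - m))) = size B by rewrite /B size_map !size_iota.
  rewrite /k (exp_tail_cat _ _ _ SA) EA exp_tail0 L1 (exp_tail_cat _ _ _ SB).
  rewrite L2 EC exp_tail0.
  rewrite /C walk_edges_cat L1 walk_edges_cat (last_exp_tail _ SB).
  rewrite L2 !count_cat -!/(C _ t).
  have -> : i :: A = rev (iota m (i - m).+1) by rewrite rev_iota_cons subnKC.
  have -> : M :: Cc = rev (iota j (M - j).+1) by rewrite rev_iota_cons subnKC.
  rewrite C_desc C_asc C_desc.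
  rewrite /f addnA; apply: arith_final => //.
- rewrite ZZ /follows. by exists k.
Qed.


Lemma perm_of_counts x1 s1 x2 s2 : path path_adj x1 s1 -> path path_adj x2 s2 ->
  (forall t, C (x1 :: s1) t = C (x2 :: s2) t) ->
  perm_eq (walk_edges (x1 :: s1)) (walk_edges (x2 :: s2)).
Proof.
move=> P1 P2 Hc.
have F1 := allP (edges_form P1). have F2 := allP (edges_form P2).
rewrite /perm_eq; apply/allP => [[a b]]; rewrite mem_cat => /orP[] He.
- have /eqP /= Eb := F1 _ He. subst b. by apply/eqP; apply: (Hc a).
- have /eqP /= Eb := F2 _ He. subst b. by apply/eqP; apply: (Hc a).
Qed.

Theorem lemma5p3 (n : nat) (hn : 2 <= n) (W : seq nat) :
  is_walk n W ->
  exists W' : seq nat,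
    is_walk n W' /\ walk_equiv W' W /\
    exists m i j M : nat,
      [/\ m <= i, i <= j, j <= M & M <= n] /\
      is_walk n (zigzag m i j M) /\ follows W' (zigzag m i j M).
Proof.
case: W => [//|x s] [Hp Ha].
have [m [M [H1 H2 H3 H4 H5]]] := invariant Hp.
set i := minn x (last x s) in H1 H4 *. set j := maxn x (last x s) in H2 H4 *.
have HMn : M <= n := allP Ha _ H5.
have hij : i <= j by rewrite /i /j; lia.
have [W' [HW' HC HZ HF]] := construct H1 hij H2 HMn H3 H4.
exists W'; split => //; split.
  case: W' HW' HC {HF} => [//|y s'] [Hp' _] HC.
  by apply: perm_of_counts => // t; rewrite HC.
by exists m, i, j, M.
Qed.
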